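(* Let $(H_X,H_Z)$ be a CSS code with CSS logical basis $(L_X,L_Z)$ such that every vector in $\mathrm{rs}(H_X)+\mathrm{rs}(L_X)$ and every vector in $\mathrm{rs}(H_Z)+\mathrm{rs}(L_Z)$ has even Hamming weight. Let $\mathcal L\subseteq[k]\setminus\{1\}$ and $u=\sum_{j\in\mathcal L}(L_X)_j$, where $(L_X)_j$ is row $j$. Then for every $z\in(L_Z)_1+\mathrm{rs}(H_Z)$: (i) for every $x\in u+\mathrm{rs}(H_X)$, the Pauli operator $(x|z)$ (representing $\overline Z_1\overline X_{\mathcal L}$) has even weight $|x\vee z|$; (ii) for every $x\in (L_X)_1+u+\mathrm{rs}(H_X)$, the Pauli operator $(x|z)$ (representing $\overline Y_1\overline X_{\mathcal L}$ up to phase) has odd weight $|x\vee z|$.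
   Context: Conventions: arithmetic over $\mathbb F_2$, row vectors, $\mathrm{rs}$ = row space, $\ker M=\{v:Mv^T=0\}$. A CSS code is given by $H_X,H_Z$ with $H_XH_Z^T=0$, $k=n-\operatorname{rank}H_X-\operatorname{rank}H_Z$; a CSS logical basis is $L_X,L_Z\in\mathbb F_2^{k\times n}$ with rows of $L_X$ in $\ker H_Z$, rows of $L_Z$ in $\ker H_X$, $L_XL_Z^T=I_k$. A pair $(x|z)\in\mathbb F_2^{2n}$ represents the Pauli operator $\prod_iX_i^{x_i}Z_i^{z_i}$ up to phase; its weight is $|x\vee z|=\#\{i:x_i=1\text{ or }z_i=1\}$. *)

(* Defs.v *)
From mathcomp Require Import all_boot all_algebra.
Set Implicit Arguments. Unset Strict Implicit. Unset Printing Implicit Defensive.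
Import GRing.Theory.
Local Open Scope ring_scope.

Definition hwt (n : nat) (v : 'rV['F_2]_n) : nat := #|[set i : 'I_n | v 0 i != 0]|.

Definition pauli_wt (n : nat) (x z : 'rV['F_2]_n) : nat :=
  #|[set i : 'I_n | (x 0 i != 0) || (z 0 i != 0)]|.

(* Main.v *)
Require Import Defs.
From mathcomp Require Import all_boot all_algebra.
Import GRing.Theory.
Local Open Scope ring_scope.
Lemma F2cases (a : 'F_2) : a = 0 \/ a = 1.
Proof.
case: a => [[|[|m]]] Hm.
- by left; apply: val_inj.
- by right; apply: val_inj.
- by move: Hm; rewrite pdiv_id.
Qed.
Lemma F2_2 : (2%:R : 'F_2) = 0.
Proof. exact: (@pchar_Fp_0 2). Qed.
Lemma F2_11 : (1 + 1 : 'F_2) = 0.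
Proof. by rewrite -F2_2. Qed.
Lemma bitE (a : 'F_2) : ((a != 0)%:R : 'F_2) = a.
Proof. by case: (F2cases a) => ->; rewrite ?eqxx ?oner_eq0. Qed.
Lemma bitOr (a b : 'F_2) : (((a != 0) || (b != 0))%:R : 'F_2) = a + b + a * b.
Proof.
case: (F2cases a) => ->; case: (F2cases b) => ->;
 rewrite ?eqxx ?oner_eq0 /= ?mul0r ?mulr0 ?mul1r ?addr0 ?add0r ?F2_11 ?add0r //.
Qed.
Lemma natF2 (m : nat) : (m%:R : 'F_2) = (odd m)%:R.
Proof.
rewrite -{1}(odd_double_half m) natrD -muln2 natrM.
by rewrite F2_2 mulr0 addr0.
Qed.
Lemma oddF2 m : odd m = ((m%:R : 'F_2) != 0).
Proof. by rewrite natF2; case: (odd m); rewrite ?eqxx ?oner_eq0. Qed.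
Lemma hwtF n (v : 'rV['F_2]_n) : ((hwt v)%:R : 'F_2) = \sum_i v 0 i.
Proof.
rewrite /hwt -[#|_|]sum1_card big_mkcond /= natr_sum; apply: eq_bigr => i _.
by rewrite inE -{2}(bitE (v 0 i)); case: (v 0 i != 0).
Qed.
Lemma pwF n (x z : 'rV['F_2]_n) : ((pauli_wt x z)%:R : 'F_2) =
   \sum_i x 0 i + \sum_i z 0 i + (x *m z^T) 0 0.
Proof.
rewrite /pauli_wt -[#|_|]sum1_card big_mkcond /= natr_sum mxE -!big_split /=.
apply: eq_bigr => i _; rewrite inE !mxE -(bitOr (x 0 i) (z 0 i)).
by case: (_ || _).
Qed.
Lemma evenF n (v : 'rV['F_2]_n) : ~~ odd (hwt v) -> \sum_i v 0 i = 0.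
Proof. by move=> H; rewrite -hwtF natF2 (negbTE H). Qed.

Theorem mainTheorem16 (n mx mz k' : nat)
  (HX : 'M['F_2]_(mx, n)) (HZ : 'M['F_2]_(mz, n))
  (LX LZ : 'M['F_2]_(k'.+1, n))
  (hcss : HX *m HZ^T = 0)
  (hk : k'.+1 = (n - \rank HX - \rank HZ)%N)
  (hLXker : LX *m HZ^T = 0)
  (hLZker : LZ *m HX^T = 0)
  (hdual : LX *m LZ^T = 1%:M)
  (hevX : forall v : 'rV['F_2]_n, (v <= col_mx HX LX)%MS -> ~~ odd (hwt v))
  (hevZ : forall v : 'rV['F_2]_n, (v <= col_mx HZ LZ)%MS -> ~~ odd (hwt v))
  (Lset : {set 'I_k'.+1}) (hL : ord0 \notin Lset) :
  let u := \sum_(j in Lset) row j LX in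
  forall z : 'rV['F_2]_n, (z - row ord0 LZ <= HZ)%MS ->
    (forall x : 'rV['F_2]_n, (x - u <= HX)%MS -> ~~ odd (pauli_wt x z)) /\
    (forall x : 'rV['F_2]_n, (x - (row ord0 LX + u) <= HX)%MS -> odd (pauli_wt x z)).
Proof.
move=> u z hz.
have hzev : \sum_i z 0 i = 0.
  apply: evenF; apply: hevZ; rewrite -addsmxE.
  rewrite -(subrK (row ord0 LZ) z); apply: addmx_sub_adds => //; exact: row_sub.
have key : forall x, (x <= col_mx HX LX)%MS ->
    odd (pauli_wt x z) = ((x *m z^T) 0 0 != 0).
  move=> x hx; rewrite oddF2 pwF (@evenF _ x (hevX x hx)) hzev !add0r //.
case/submxP: hz => D hD.
have zE : z = row ord0 LZ + D *m HZ by rewrite -hD addrC subrK.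
have HXz : HX *m z^T = 0.
  rewrite zE raddfD /= mulmxDr. rewrite trmx_mul mulmxA hcss mul0mx addr0 rowE trmx_mul mulmxA.
  by rewrite -(trmxK HX) -trmx_mul hLZker trmx0 mul0mx.
have LXz : forall j, (LX *m z^T) j 0 = (j == ord0)%:R.
  move=> j; rewrite zE raddfD /= mulmxDr trmx_mul mulmxA hLXker mul0mx addr0.
  transitivity ((1%:M : 'M['F_2]_k'.+1) j ord0); last by rewrite mxE.
  rewrite -hdual !mxE; apply: eq_bigr => i _; by rewrite !mxE.
have uz : (u *m z^T) 0 0 = 0.
  rewrite /u mulmx_suml summxE big1 // => j hj.
  by rewrite -row_mul mxE LXz; case: eqP hj => // ->; rewrite (negbTE hL).
have uLX : (u <= LX)%MS by apply: summx_sub => j _; exact: row_sub.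
split=> x hx; case/submxP: (hx) => E hE.
- rewrite key; last first.
    by rewrite -addsmxE -(subrK u x); apply: addmx_sub_adds.
  by rewrite -(subrK u x) mulmxDl hE -mulmxA HXz mulmx0 add0r uz eqxx.
- rewrite key; last first.
    rewrite -addsmxE -(subrK (row ord0 LX + u) x); apply: addmx_sub_adds => //.
    by apply: addmx_sub => //; exact: row_sub.
  rewrite -(subrK (row ord0 LX + u) x) mulmxDl hE -mulmxA HXz mulmx0 add0r.
  by rewrite mulmxDl mxE [X in _ + X]uz addr0 -row_mul mxE LXz eqxx oner_eq0.
Qed.
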